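(* If $\alpha\in(-1,1)^N$ (i.e. $|\alpha|_\infty<1$), then for each $n\in\mathbb{N}$ the single-valued fractal operator $\mathcal{F}^\alpha_{\Delta,B_n}:\mathcal{C}(I)\to\mathcal{C}(I)$, $f\mapsto f^\alpha_{\Delta,B_n(f)}$, is bounded below and not compact.
   Context: $I=[x_0,x_N]$, $\mathcal{C}(I)$ real continuous functions with sup norm, $\Delta=\{x_0<\dots<x_N\}$, $N\ge2$, $I_i=[x_{i-1},x_i]$, $L_i(x)=a_ix+b_i$ the affine map of $I$ onto $I_i$ with $L_i(x_0)=x_{i-1}$, $L_i(x_N)=x_i$; $|\alpha|_\infty=\max_i|\alpha_i|$. For $f,b\in\mathcal{C}(I)$ with $b(x_0)=f(x_0)$, $b(x_N)=f(x_N)$, $f^\alpha_{\Delta,b}$ is the unique $g\in\mathcal{C}(I)$ with $g(x)=f(x)+\alpha_i(g-b)(L_i^{-1}(x))$ for $x\in I_i$. $B_n$ is the Bernstein operator $B_nf(x)=\sum_{k=0}^n f\big(x_0+\tfrac kn(x_N-x_0)\big)\binom nk\frac{(x-x_0)^k(x_N-x)^{n-k}}{(x_N-x_0)^n}$. A linear operator $T$ is bounded below if there is $C>0$ with $\|Tf\|_\infty\ge C\|f\|_\infty$ for all $f$. *)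

(* Defs.v *)
From Stdlib Require Import Reals Lra.
Open Scope R_scope.

Definition inI (x : nat -> R) (N : nat) (t : R) : Prop := x 0%nat <= t <= x N.

Definition partition (x : nat -> R) (N : nat) : Prop :=
  (2 <= N)%nat /\ forall i, (i < N)%nat -> x i < x (S i).

Definition cont_on (x : nat -> R) (N : nat) (f : R -> R) : Prop :=
  forall t, inI x N t -> limit1_in f (inI x N) (f t) t.

Definition is_supnorm (x : nat -> R) (N : nat) (f : R -> R) (s : R) : Prop :=
  is_lub (fun y => exists t, inI x N t /\ y = Rabs (f t)) s.

Definition L (x : nat -> R) (N i : nat) (t : R) : R :=
  x (pred i) + (x i - x (pred i)) / (x N - x 0%nat) * (t - x 0%nat).

Definition Linv (x : nat -> R) (N i : nat) (t : R) : R :=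
  x 0%nat + (x N - x 0%nat) / (x i - x (pred i)) * (t - x (pred i)).

Definition is_fractal (x : nat -> R) (N : nat) (alpha : nat -> R)
  (f b g : R -> R) : Prop :=
  cont_on x N g /\
  forall i t, (1 <= i <= N)%nat -> x (pred i) <= t <= x i ->
    g t = f t + alpha i * (g (Linv x N i t) - b (Linv x N i t)).

Definition Bern (x : nat -> R) (N n : nat) (f : R -> R) (t : R) : R :=
  sum_f_R0 (fun k =>
    f (x 0%nat + INR k / INR n * (x N - x 0%nat)) * C n k *
    ((t - x 0%nat) ^ k * (x N - t) ^ (n - k)) / (x N - x 0%nat) ^ n) n.

Definition bounded_below (x : nat -> R) (N : nat) (T : (R -> R) -> (R -> R)) : Prop :=
  exists c, 0 < c /\
    forall f s t, cont_on x N f -> is_supnorm x N f s -> is_supnorm x N (T f) t ->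
      c * s <= t.

Definition compact_op (x : nat -> R) (N : nat) (T : (R -> R) -> (R -> R)) : Prop :=
  forall (fs : nat -> R -> R) (M : R),
    (forall k, cont_on x N (fs k)) ->
    (forall k t, inI x N t -> Rabs (fs k t) <= M) ->
    exists (phi : nat -> nat) (g : R -> R),
      (forall k, (phi k < phi (S k))%nat) /\ cont_on x N g /\
      forall eps, 0 < eps -> exists K, forall k, (K <= k)%nat ->
        forall t, inI x N t -> Rabs (T (fs (phi k)) t - g t) < eps.

(* Main.v *)
Require Import Defs.
From Stdlib Require Import Reals Lra Lia Psatz.
Open Scope R_scope.

Lemma C_nonneg n k : 0 <= C n k.
Proof.
  unfold C, Rdiv. apply Rmult_le_pos; [apply pos_INR|].
  apply Rlt_le, Rinv_0_lt_compat, Rmult_lt_0_compat; apply lt_0_INR, Factorial.lt_O_fact.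
Qed.

Lemma mono_le x N : partition x N -> forall m, (m <= N)%nat -> x 0%nat <= x m.
Proof.
  intros [_ H] m. induction m; intros Hm; [lra|].
  specialize (H m ltac:(lia)). specialize (IHm ltac:(lia)). lra.
Qed.

Lemma L_pos x N : partition x N -> 0 < x N - x 0%nat.
Proof.
  intros P. pose proof (mono_le x N P (pred N) ltac:(destruct P; lia)) as Hm.
  destruct P as [HN H]. specialize (H (pred N) ltac:(lia)).
  replace (S (pred N)) with N in H by lia. lra.
Qed.

Lemma find_i x N t : partition x N -> inI x N t ->
  exists i, (1 <= i <= N)%nat /\ x (pred i) <= t <= x i.
Proof.
  intros P [H0 H1].
  assert (forall m, (1 <= m)%nat -> (m <= N)%nat -> t <= x m ->
     exists i, (1 <= i <= m)%nat /\ x (pred i) <= t <= x i).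
  { induction m; intros Hm1 HmN Ht; [lia|].
    destruct m as [|m']. { exists 1%nat; simpl; split; [lia|lra]. }
    destruct (Rle_dec t (x (S m'))).
    - destruct (IHm ltac:(lia) ltac:(lia) r) as [i [Hi Hi2]]. exists i; split; [lia|auto].
    - exists (S (S m')); simpl; split; [lia|lra]. }
  destruct P as [HN _].
  destruct (H N ltac:(lia) ltac:(lia) H1) as [i Hi]; exists i; tauto.
Qed.

Lemma piece x N t : partition x N -> inI x N t ->
  exists i, (1 <= i <= N)%nat /\ x (pred i) <= t <= x i /\ inI x N (Linv x N i t).
Proof.
  intros P Ht. destruct (find_i x N t P Ht) as [i [Hi Ht2]].
  exists i. split; [auto|split; [auto|]].
  pose proof (L_pos x N P) as HL.
  assert (Hd : x (pred i) < x i).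
  { destruct P as [_ H]. specialize (H (pred i) ltac:(lia)). replace (S (pred i)) with i in H by lia. auto. }
  unfold inI, Linv.
  set (d := x i - x (pred i)). set (rho := (t - x (pred i)) / d).
  assert (Hr : rho * d = t - x (pred i)) by (unfold rho, d; field; lra).
  replace ((x N - x 0%nat) / d * (t - x (pred i))) with ((x N - x 0%nat) * rho)
    by (unfold rho; field; unfold d; lra).
  assert (0 <= rho) by (unfold d in *; nra).
  assert (rho <= 1) by (unfold d in *; nra).
  split; nra.
Qed.

Lemma alpha_bound (alpha : nat -> R) N :
  (forall i, (1 <= i <= N)%nat -> Rabs (alpha i) < 1) ->
  exists a, 0 <= a < 1 /\ forall i, (1 <= i <= N)%nat -> Rabs (alpha i) <= a.
Proof.
  induction N; intros H.
  - exists 0; split; [lra|intros; lia].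
  - destruct IHN as [a [Ha Hi]]. { intros; apply H; lia. }
    exists (Rmax a (Rabs (alpha (S N)))). split.
    + split. { apply Rle_trans with a; [lra|apply Rmax_l]. }
      apply Rmax_lub_lt; [lra|apply H; lia].
    + intros i Hi'. destruct (Nat.eq_dec i (S N)) as [->|Hne].
      * apply Rmax_r.
      * apply Rle_trans with a; [apply Hi; lia|apply Rmax_l].
Qed.

Lemma node_in x N n k : partition x N -> (1 <= n)%nat -> (k <= n)%nat ->
  inI x N (x 0%nat + INR k / INR n * (x N - x 0%nat)).
Proof.
  intros P Hn Hk. pose proof (L_pos x N P).
  assert (0 < INR n) by (apply lt_0_INR; lia).
  assert (INR k <= INR n) by (apply le_INR; auto).
  pose proof (pos_INR k).
  set (rho := INR k / INR n).
  assert (rho * INR n = INR k) by (unfold rho; field; lra).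
  assert (0 <= rho) by nra. assert (rho <= 1) by nra.
  unfold inI; split; nra.
Qed.

Lemma Bern_bound x N n f M v : partition x N -> (1 <= n)%nat ->
  (forall w, inI x N w -> Rabs (f w) <= M) -> inI x N v ->
  Rabs (Bern x N n f v) <= M.
Proof.
  intros P Hn Hf [Hv1 Hv2]. pose proof (L_pos x N P) as HL.
  unfold Bern.
  set (W := fun k => C n k * ((v - x 0%nat) ^ k * (x N - v) ^ (n - k)) / (x N - x 0%nat) ^ n).
  assert (HW : forall k, 0 <= W k).
  { intros k; unfold W, Rdiv. apply Rmult_le_pos; [apply Rmult_le_pos; [apply C_nonneg|]|].
    apply Rmult_le_pos; apply pow_le; lra.
    apply Rlt_le, Rinv_0_lt_compat, pow_lt; lra. }
  eapply Rle_trans; [apply sum_f_R0_triangle|].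
  apply Rle_trans with (sum_f_R0 (fun k => W k * M) n).
  - apply sum_Rle. intros k Hk.
    replace (f (x 0%nat + INR k / INR n * (x N - x 0%nat)) * C n k *
       ((v - x 0%nat) ^ k * (x N - v) ^ (n - k)) / (x N - x 0%nat) ^ n)
      with (f (x 0%nat + INR k / INR n * (x N - x 0%nat)) * W k) by (unfold W, Rdiv; ring).
    rewrite Rabs_mult, (Rabs_pos_eq (W k) (HW k)), Rmult_comm.
    apply Rmult_le_compat_l; [auto|]. apply Hf, node_in; auto.
  - rewrite <- scal_sum.
    assert (sum_f_R0 W n = 1) as ->.
    { unfold W. rewrite <- (sum_eq (fun k => C n k * (v - x 0%nat) ^ k * (x N - v) ^ (n - k) * / (x N - x 0%nat) ^ n)).
      2:{ intros; unfold Rdiv; ring. }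
      rewrite <- scal_sum, <- binomial.
      replace (v - x 0%nat + (x N - v)) with (x N - x 0%nat) by ring.
      rewrite Rmult_comm, Rinv_r; [lra|apply pow_nonzero; lra]. }
    lra.
Qed.

Lemma Bern_minus x N n f g v :
  Bern x N n f v - Bern x N n g v = Bern x N n (fun w => f w - g w) v.
Proof.
  unfold Bern. rewrite <- minus_sum. apply sum_eq. intros; unfold Rdiv; ring.
Qed.

Lemma est ft gt gv bv al a G S : ft = gt - al * (gv - bv) -> Rabs al <= a ->
  Rabs gt <= G -> Rabs gv <= G -> Rabs bv <= S -> Rabs ft <= G + a * (G + S).
Proof.
  intros -> Ha H1 H2 H3.
  unfold Rminus at 1. eapply Rle_trans; [apply Rabs_triang|].
  rewrite Rabs_Ropp, Rabs_mult.
  apply Rplus_le_compat; [auto|].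
  apply Rmult_le_compat; try apply Rabs_pos; auto.
  unfold Rminus; eapply Rle_trans; [apply Rabs_triang|]. rewrite Rabs_Ropp. lra.
Qed.

Definition tent (c r u : R) : R := Rmax 0 (1 - Rabs (u - c) * / r).

Lemma tent_bounds c r u : 0 < r -> 0 <= tent c r u <= 1.
Proof.
  intros Hr. unfold tent. split; [apply Rmax_l|].
  apply Rmax_lub; [lra|]. pose proof (Rabs_pos (u - c)).
  pose proof (Rinv_0_lt_compat r Hr). nra.
Qed.

Lemma tent_center c r : 0 < r -> tent c r c = 1.
Proof.
  intros Hr. unfold tent. rewrite Rminus_diag, Rabs_R0, Rmult_0_l, Rminus_0_r.
  apply Rmax_right; lra.
Qed.

Lemma tent_far c r u : 0 < r -> r <= Rabs (u - c) -> tent c r u = 0.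
Proof.
  intros Hr H. unfold tent. apply Rmax_left.
  pose proof (Rinv_0_lt_compat r Hr). assert (r * / r = 1) by (field; lra). nra.
Qed.

Lemma Rmax0_lip A B : Rabs (Rmax 0 A - Rmax 0 B) <= Rabs (A - B).
Proof. unfold Rmax; destruct (Rle_dec 0 A), (Rle_dec 0 B); split_Rabs; lra. Qed.

Lemma tent_lip c r u t : 0 < r -> Rabs (tent c r u - tent c r t) <= / r * Rabs (u - t).
Proof.
  intros Hr. unfold tent. eapply Rle_trans; [apply Rmax0_lip|].
  pose proof (Rinv_0_lt_compat r Hr).
  replace (1 - Rabs (u - c) * / r - (1 - Rabs (t - c) * / r))
    with ((Rabs (t - c) - Rabs (u - c)) * / r) by ring.
  rewrite Rabs_mult, (Rabs_pos_eq (/ r)) by lra. rewrite Rmult_comm.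
  apply Rmult_le_compat_l; [lra|].
  eapply Rle_trans; [apply Rabs_triang_inv2|].
  replace (t - c - (u - c)) with (- (u - t)) by ring. rewrite Rabs_Ropp; lra.
Qed.

Lemma lip_cont x N f K : 0 < K -> (forall u t, Rabs (f u - f t) <= K * Rabs (u - t)) ->
  cont_on x N f.
Proof.
  intros HK Hf t _ eps Heps. exists (eps / K). split.
  - apply Rdiv_lt_0_compat; lra.
  - intros u [_ Hu]. simpl in *. unfold R_dist in *.
    eapply Rle_lt_trans; [apply Hf|].
    replace eps with (K * (eps / K)) by (field; lra).
    apply Rmult_lt_compat_l; auto.
Qed.

Definition ctr (x : nat -> R) N (k : nat) : R :=
  x 0%nat + (x N - x 0%nat) * (/ (INR k + 2) + / (INR k + 1)) / 2.
Definition rad (x : nat -> R) N (k : nat) : R :=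
  (x N - x 0%nat) * (/ (INR k + 1) - / (INR k + 2)) / 2.

Lemma inv_facts k : 0 < / (INR k + 2) < / (INR k + 1) /\ / (INR k + 1) <= 1.
Proof.
  pose proof (pos_INR k). split; [split|].
  - apply Rinv_0_lt_compat; lra.
  - apply Rinv_lt_contravar; nra.
  - rewrite <- Rinv_1. apply Rinv_le_contravar; lra.
Qed.

Lemma rad_pos x N k : partition x N -> 0 < rad x N k.
Proof. intros P. pose proof (L_pos x N P). pose proof (inv_facts k). unfold rad. nra. Qed.

Lemma ctr_in x N k : partition x N -> inI x N (ctr x N k).
Proof. intros P. pose proof (L_pos x N P). pose proof (inv_facts k). unfold inI, ctr. split; nra. Qed.

Lemma ctr_sep x N p q : partition x N -> (p < q)%nat ->
  rad x N q <= Rabs (ctr x N p - ctr x N q).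
Proof.
  intros P Hpq. pose proof (L_pos x N P). pose proof (inv_facts p). pose proof (inv_facts q).
  assert (INR p + 2 <= INR q + 1).
  { assert (INR (S p) <= INR q) by (apply le_INR; lia). rewrite S_INR in H2. lra. }
  assert (/ (INR q + 1) <= / (INR p + 2)) by (apply Rinv_le_contravar; [pose proof (pos_INR p); lra|lra]).
  unfold rad, ctr.
  rewrite Rabs_pos_eq; nra.
Qed.

Theorem mainTheorem15 (x : nat -> R) (N : nat) (alpha : nat -> R) (n : nat)
  (T : (R -> R) -> (R -> R)) :
  partition x N ->
  (forall i, (1 <= i <= N)%nat -> Rabs (alpha i) < 1) ->
  (1 <= n)%nat ->
  (forall f, cont_on x N f -> is_fractal x N alpha f (Bern x N n f) (T f)) ->
  bounded_below x N T /\ ~ compact_op x N T.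
Proof.
  intros P Hal Hn HT.
  destruct (alpha_bound alpha N Hal) as [a [Ha Hai]].
  assert (HI0 : inI x N (x 0%nat)) by (pose proof (L_pos x N P); unfold inI; lra).
  split.
  - exists ((1 - a) / 2). split; [lra|].
    intros f s tg Hf [Hs1 Hs2] [Ht1 Ht2].
    assert (Hfs : forall w, inI x N w -> Rabs (f w) <= s) by (intros w Hw; apply Hs1; eauto).
    assert (Hgt : forall w, inI x N w -> Rabs (T f w) <= tg) by (intros w Hw; apply Ht1; eauto).
    assert (0 <= s) by (eapply Rle_trans; [apply Rabs_pos|apply (Hfs _ HI0)]).
    assert (0 <= tg) by (eapply Rle_trans; [apply Rabs_pos|apply (Hgt _ HI0)]).
    assert (s <= tg + a * (tg + s)).
    { apply Hs2. intros y [t [Ht ->]].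
      destruct (piece x N t P Ht) as [i [Hi [Hti Hv]]].
      destruct (HT f Hf) as [_ E].
      specialize (E i t Hi Hti).
      eapply est with (gt := T f t) (al := alpha i) (gv := T f (Linv x N i t))
        (bv := Bern x N n f (Linv x N i t)); auto.
      + rewrite E; ring.
      + apply Bern_bound; auto. }
    nra.
  - intros Hc.
    set (fs := fun k => tent (ctr x N k) (rad x N k)).
    assert (Hcont : forall k, cont_on x N (fs k)).
    { intros k. apply lip_cont with (/ rad x N k).
      - apply Rinv_0_lt_compat, rad_pos; auto.
      - intros u t; apply tent_lip, rad_pos; auto. }
    destruct (Hc fs 1 Hcont) as [phi [g [Hphi [_ Hconv]]]].
    { intros k t _. unfold fs. pose proof (tent_bounds (ctr x N k) (rad x N k) t (rad_pos x N k P)).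
      rewrite Rabs_pos_eq; lra. }
    set (e := (1 - a) / 8).
    destruct (Hconv e ltac:(unfold e; lra)) as [K HK].
    set (p := phi K). set (q := phi (S K)).
    assert (Hpq : (p < q)%nat) by apply Hphi.
    set (u0 := ctr x N p).
    assert (Hu0 : inI x N u0) by apply ctr_in, P.
    destruct (piece x N u0 P Hu0) as [i [Hi [Hti Hv]]].
    set (v := Linv x N i u0) in *.
    destruct (HT (fs p) (Hcont p)) as [_ Ep]. specialize (Ep i u0 Hi Hti).
    destruct (HT (fs q) (Hcont q)) as [_ Eq]. specialize (Eq i u0 Hi Hti).
    fold v in Ep, Eq.
    assert (Hfp : fs p u0 = 1) by (apply tent_center, rad_pos; auto).
    assert (Hfq : fs q u0 = 0) by (apply tent_far; [apply rad_pos; auto|]; apply ctr_sep; auto).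
    assert (Hh : forall w, inI x N w -> Rabs (T (fs p) w - T (fs q) w) <= 2 * e).
    { intros w Hw. pose proof (HK K (le_n _) w Hw). pose proof (HK (S K) ltac:(lia) w Hw).
      fold p q in H, H0. split_Rabs; lra. }
    assert (Hb : Rabs (Bern x N n (fun w => fs p w - fs q w) v) <= 1).
    { apply Bern_bound; auto. intros w _. unfold fs.
      pose proof (tent_bounds (ctr x N p) (rad x N p) w (rad_pos x N p P)).
      pose proof (tent_bounds (ctr x N q) (rad x N q) w (rad_pos x N q P)).
      split_Rabs; lra. }
    assert (Rabs (fs p u0 - fs q u0) <= 2 * e + a * (2 * e + 1)).
    { eapply est with (gt := T (fs p) u0 - T (fs q) u0) (al := alpha i)
        (gv := T (fs p) v - T (fs q) v) (bv := Bern x N n (fun w => fs p w - fs q w) v); auto.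
      rewrite <- Bern_minus, Ep, Eq. ring. }
    rewrite Hfp, Hfq, Rminus_0_r, Rabs_R1 in H. unfold e in H. nra.
Qed.
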